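(* For every integer $n\ge 5$, every $0<r<1/2$, and every convex $n$-gon $K$, we have $$\frac{\Delta(K_r)}{\Delta(K)}\ge 1-2r.$$
   Context: Let $K=A_1A_2\ldots A_n$ be a convex polygon with vertices listed counterclockwise, indices taken modulo $n$. For fixed $0<r\le 1$, let $B_k$ be the point on the edge $A_{k+1}A_{k+2}$ with $A_{k+1}B_k/A_{k+1}A_{k+2}=r$, and let $K_r$ be the $n$-gon bounded by the segments $A_kB_k$, $k=1,\ldots,n$. $\Delta(\cdot)$ denotes area. *)

(* Defs.v *)
From HB Require Import structures.
From mathcomp Require Import all_boot all_order all_algebra.
Set Implicit Arguments. Unset Strict Implicit. Unset Printing Implicit Defensive.
Import Order.TTheory GRing.Theory Num.Theory.
Local Open Scope ring_scope.

(* Planar geometry over a real field R; points are pairs (x, y).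
   A polygon A_1 ... A_n is given by the sequence s of its vertices (n = size s),
   indices taken modulo n (0-based here). *)

Section Poly.
Variable R : realFieldType.
Notation pt := (R * R)%type.

Definition vtx (s : seq pt) (k : nat) : pt := nth (0, 0) s (k %% size s).

Definition det2 (u v : pt) : R := u.1 * v.2 - u.2 * v.1.
Definition vsub (p q : pt) : pt := (p.1 - q.1, p.2 - q.2).

(* orientation: > 0 iff c lies strictly to the left of the directed line a -> b *)
Definition orient (a b c : pt) : R := det2 (vsub b a) (vsub c a).

(* s is a (strictly) convex polygon with vertices listed counterclockwise:
   every vertex other than A_i, A_{i+1} lies strictly to the left of the
   directed edge A_i A_{i+1}. *)
Definition convex_ccw (s : seq pt) : Prop :=
  (3 <= size s)%N /\
  forall i j : nat, (i < size s)%N -> (j < size s)%N ->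
    j != i -> j != (i.+1 %% size s)%N ->
    0 < orient (vtx s i) (vtx s i.+1) (vtx s j).

Definition area (s : seq pt) : R :=
  `| 2^-1 * \sum_(k < size s) det2 (vtx s k) (vtx s k.+1) |.

Definition lerp (p q : pt) (t : R) : pt :=
  (p.1 + t * (q.1 - p.1), p.2 + t * (q.2 - p.2)).

(* Intersection point of the line through p1, p2 with the line through p3, p4
   (Cramer's rule; meaningful when the lines are not parallel). *)
Definition meet (p1 p2 p3 p4 : pt) : pt :=
  lerp p1 p2 (det2 (vsub p3 p1) (vsub p4 p3) / det2 (vsub p2 p1) (vsub p4 p3)).

Definition Bpt (r : R) (s : seq pt) (k : nat) : pt :=
  lerp (vtx s k.+1) (vtx s k.+2) r.

(* K_r : the n-gon bounded by the segments A_k B_k; its k-th vertex is the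
   intersection of the consecutive lines A_k B_k and A_{k+1} B_{k+1}. *)
Definition Kr (r : R) (s : seq pt) : seq pt :=
  mkseq (fun k => meet (vtx s k) (Bpt r s k) (vtx s k.+1) (Bpt r s k.+1)) (size s).

End Poly.

(* Main.v *)
Require Import Defs.
From HB Require Import structures.
From mathcomp Require Import all_boot all_order all_algebra.
From mathcomp Require Import ring lra zify.
Import Order.TTheory GRing.Theory Num.Theory.
Local Open Scope ring_scope.
Section S.
Variable R : realFieldType.
Implicit Types p q x s t a b c d e : (R * R)%type.

Lemma orient_cyc a b c : orient a b c = orient b c a.
Proof. rewrite /orient /det2 /vsub /=; ring. Qed.

Lemma L_id p q x s t :
  let A := orient p q s in let B := orient q s t in
  let D := det2 (vsub q p) (vsub t s) in
  let L := det2 p x + det2 x t + det2 q s - det2 p s - det2 q t in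
  L = orient p x t - D /\
  A * B * L = B^+2 * orient p q x + A^+2 * orient x s t + (A * B + D * (A + B)) * orient q x s.
Proof. rewrite /orient /det2 /vsub /=; split; ring. Qed.

Lemma Lpos p q x s t :
 0 < orient p q s -> 0 < orient q s t -> 0 < orient p q x -> 0 < orient x s t ->
 0 < orient q x s -> 0 < orient p x t ->
 0 <= det2 p x + det2 x t + det2 q s - det2 p s - det2 q t.
Proof.
move=> hA hB h1 h2 h3 h4.
have [e1 e2] := L_id p q x s t.
set D := det2 (vsub q p) (vsub t s) in e1 e2.

case: (lerP D 0) => hD.
  by rewrite e1; lra.
have hAB : 0 < orient p q s * orient q s t by apply: mulr_gt0.
have : 0 <= orient p q s * orient q s t * (det2 p x + det2 x t + det2 q s - det2 p s - det2 q t).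
  rewrite e2; apply: addr_ge0; first apply: addr_ge0.
  - by apply: mulr_ge0; [apply: sqr_ge0| apply: ltW].
  - by apply: mulr_ge0; [apply: sqr_ge0| apply: ltW].
  apply: mulr_ge0; last exact: ltW.
  apply: addr_ge0; first exact: ltW.
  apply: mulr_ge0; first exact: ltW.
  by apply: addr_ge0; apply: ltW.
by rewrite pmulr_rge0.
Qed.

Lemma plucker e x y z : det2 e y * det2 x z = det2 e x * det2 y z + det2 e z * det2 x y.
Proof. rewrite /det2; ring. Qed.

Lemma orient_cyc2 a b c : orient a b c = orient c a b.
Proof. by rewrite orient_cyc orient_cyc. Qed.

Lemma keyF1 a b c d (r : R) : 0 < r -> r < 1 ->
  0 < orient a b c -> 0 < orient a b d -> 0 < orient c d a -> 0 < orient b c d ->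
  0 < det2 (vsub (lerp b c r) a) (vsub (lerp c d r) b) /\
  det2 (vsub b a) (vsub (meet a (lerp b c r) b (lerp c d r)) a) <= r * orient a b c.
Proof.
move=> r0 r1 habc habd hcda hbcd.
set Dn := det2 (vsub (lerp b c r) a) (vsub (lerp c d r) b).
set N := det2 (vsub b a) (vsub (lerp c d r) b).
have eD : Dn = (1-r)^+2 * orient a b c + (1-r) * r * orient a b d + r * (1-r) * orient a b c
   + r^+2 * (orient c d a + orient a b c).
  by rewrite /Dn /orient /det2 /vsub /lerp /=; ring.
have eN : Dn - N = r^+2 * orient b c d.
  by rewrite /Dn /N /orient /det2 /vsub /lerp /=; ring.
have r1' : 0 < 1 - r by lra.
have hD : 0 < Dn.
  have t1 : 0 < (1-r)^+2 * orient a b c by rewrite mulr_gt0 // exprn_gt0.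
  have t2 : 0 < (1-r) * r * orient a b d by rewrite !mulr_gt0.
  have t3 : 0 < r * (1-r) * orient a b c by rewrite !mulr_gt0.
  have t4 : 0 < r^+2 * (orient c d a + orient a b c) by rewrite mulr_gt0 ?exprn_gt0 // addr_gt0.
  rewrite eD; lra.
split => //.
have eT : det2 (vsub b a) (vsub (meet a (lerp b c r) b (lerp c d r)) a)
   = (N / Dn) * (r * orient a b c).
  by rewrite /meet /N /Dn /orient /det2 /vsub /lerp /=; ring.
rewrite eT; apply: ler_piMl; first by apply: ltW; apply: mulr_gt0.
rewrite ler_pdivrMr // mul1r.
have : 0 < r^+2 * orient b c d by apply: mulr_gt0 => //; apply: exprn_gt0.
lra.
Qed.

Lemma keyF2 a b c d e (r : R) :
  det2 (vsub (lerp b c r) a) (vsub (lerp c d r) b) != 0 ->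
  det2 (vsub (meet a (lerp b c r) b (lerp c d r)) b)
       (vsub (meet b (lerp c d r) c (lerp d e r)) b) = 0.
Proof.
set Dn := det2 (vsub (lerp b c r) a) (vsub (lerp c d r) b).
set N := det2 (vsub b a) (vsub (lerp c d r) b).
set mu := det2 (vsub c b) (vsub (lerp d e r) c) / det2 (vsub (lerp c d r) b) (vsub (lerp d e r) c).
move=> hD.
have E : det2 (vsub (meet a (lerp b c r) b (lerp c d r)) b)
       (vsub (meet b (lerp c d r) c (lerp d e r)) b) = mu * (N / Dn * Dn - N).
  by rewrite /meet /mu /N /Dn /orient /det2 /vsub /lerp /=; ring.
by rewrite E divfK // subrr mulr0.
Qed.
Lemma tele_id a b X Y : det2 a b - det2 X Y =
  det2 (vsub b a) (vsub X a) - det2 (vsub X b) (vsub Y b) + (det2 Y b - det2 X a).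
Proof. rewrite /det2 /vsub /=; ring. Qed.
Lemma orient_det a b c : orient a b c = det2 a b + det2 b c - det2 a c.
Proof. rewrite /orient /det2 /vsub /=; ring. Qed.

Definition Hs (f : nat -> (R*R)%type) m := \sum_(0 <= k < (m - 2)%N) det2 (f k) (f k.+2)
  + det2 (f (m-2)%N) (f 0) + det2 (f (m-1)%N) (f 1).

Lemma H4 f : Hs f 4 = 0.
Proof. rewrite /Hs !big_nat_recr //= big_geq //= /det2; ring. Qed.

Lemma Hstep f m : (4 <= m)%N -> Hs f m.+1 = Hs f m +
  (det2 (f (m-2)%N) (f m) + det2 (f m) (f 1) + det2 (f (m-1)%N) (f 0) - det2 (f (m-2)%N) (f 0) - det2 (f (m-1)%N) (f 1)).
Proof.
move=> h4; rewrite /Hs.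
have e1 : (m.+1 - 2 = (m-2).+1)%N by lia.
have e2 : (m.+1 - 1 = m)%N by lia.
have e3 : ((m-2).+2 = m)%N by lia.
have e4 : ((m-2).+1 = m-1)%N by lia.
rewrite e1 e2 big_nat_recr //= e3 e4.
set X := \sum_(0 <= k < m - 2) _.
rewrite /X; move: X => X; ring.
Qed.

Lemma shift (F : nat -> R) m : F m = F 0 -> \sum_(0 <= k < m) F k.+1 = \sum_(0 <= k < m) F k.
Proof.
case: m => [|m] h; first by rewrite !big_geq.
by rewrite big_nat_recr //= big_nat_recl //= h addrC.
Qed.
End S.

Section Main.
Variables (R : realFieldType) (s : seq (R * R)).
Hypothesis hc : convex_ccw s.

Lemma n3 : (3 <= size s)%N. Proof. by case: hc. Qed.

Lemma vtx_mod k : vtx s (k %% size s) = vtx s k.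
Proof. by rewrite /vtx modn_mod. Qed.
Lemma vtx_mod1 k : vtx s (k %% size s).+1 = vtx s k.+1.
Proof. by rewrite /vtx -[(k %% size s).+1]addn1 modnDml addn1. Qed.
Lemma vtx_mod2 k : vtx s (k %% size s).+2 = vtx s k.+2.
Proof. by rewrite /vtx -[(k %% size s).+2]addn2 modnDml addn2. Qed.
Lemma vtx_mod3 k : vtx s (k %% size s).+3 = vtx s k.+3.
Proof. by rewrite /vtx -[(k %% size s).+3]addn3 modnDml addn3. Qed.
Lemma vtx_n : vtx s (size s) = vtx s 0.
Proof. by rewrite /vtx modnn mod0n. Qed.
Lemma vtx_nS : vtx s (size s).+1 = vtx s 1.
Proof. by rewrite /vtx -[(size s).+1]addn1 modnDl. Qed.

Lemma edge_off k i j : (j < size s)%N -> (i.+1 < size s)%N -> j != i -> j != i.+1 ->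
  0 < orient (vtx s (k+i)%N) (vtx s (k+i)%N.+1) (vtx s (k+j)%N).
Proof.
move=> hj hi hji hji1.
case: hc => h3 H.
have n0 : (0 < size s)%N by lia.
have := H ((k+i) %% size s)%N ((k+j) %% size s)%N (ltn_pmod _ n0) (ltn_pmod _ n0).
rewrite vtx_mod1 !vtx_mod; apply.
  by rewrite eqn_modDl !modn_small //; lia.
have -> : (((k + i) %% size s).+1 %% size s = (k + i.+1) %% size s)%N.
  by rewrite -[((k + i) %% size s).+1]addn1 modnDml addn1 addnS.
by rewrite eqn_modDl !modn_small //; lia.
Qed.

Lemma edge0 i j : (j < size s)%N -> (i.+1 < size s)%N -> j != i -> j != i.+1 ->
  0 < orient (vtx s i) (vtx s i.+1) (vtx s j).
Proof. by move=> *; have := @edge_off 0 i j; rewrite !add0n; apply. Qed.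

Lemma glob x y z : (x < y)%N -> (y < z)%N -> (z < size s)%N ->
  0 < orient (vtx s x) (vtx s y) (vtx s z).
Proof.
move=> hxy hyz hz.
case: (ltngtP y x.+1) => hy; first lia.
  elim: z hyz hz => [|m IH] hyz hz; first lia.
  case: (ltngtP y m) => hym; last first.
  - by rewrite hym orient_cyc; apply: edge0; lia.
  - lia.
  have h1 := IH hym (ltnW hz).
  have hp := @plucker R (vsub (vtx s x.+1) (vtx s x)) (vsub (vtx s y) (vtx s x))
      (vsub (vtx s m) (vtx s x)) (vsub (vtx s m.+1) (vtx s x)).
  have hEY : 0 < det2 (vsub (vtx s x.+1) (vtx s x)) (vsub (vtx s m) (vtx s x)).
    by apply: edge0; lia.
  have hEX : 0 < det2 (vsub (vtx s x.+1) (vtx s x)) (vsub (vtx s y) (vtx s x)).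
    by apply: edge0; lia.
  have hEZ : 0 < det2 (vsub (vtx s x.+1) (vtx s x)) (vsub (vtx s m.+1) (vtx s x)).
    by apply: edge0; lia.
  have hYZ : 0 < det2 (vsub (vtx s m) (vtx s x)) (vsub (vtx s m.+1) (vtx s x)).
    by rewrite -/(orient _ _ _) orient_cyc; apply: edge0; lia.
  have hXY : 0 < det2 (vsub (vtx s y) (vtx s x)) (vsub (vtx s m) (vtx s x)) by [].
  have : 0 < det2 (vsub (vtx s x.+1) (vtx s x)) (vsub (vtx s m) (vtx s x)) *
             det2 (vsub (vtx s y) (vtx s x)) (vsub (vtx s m.+1) (vtx s x)).
    by rewrite hp; apply: addr_gt0; apply: mulr_gt0.
  by rewrite pmulr_rgt0.
by rewrite hy; apply: edge0; lia.
Qed.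

Lemma Hpos m : (4 <= m)%N -> (m <= size s)%N -> 0 <= @Hs R (vtx s) m.
Proof.
elim: m => [|m IH] h4 hm; first lia.
case: (leqP 4 m) => hm4; last first.
  have -> : m.+1 = 4%N by lia.
  by rewrite H4.
rewrite Hstep //; apply: addr_ge0; first by apply: IH; lia.
apply: Lpos.
- by rewrite orient_cyc2; apply: glob; lia.
- by rewrite orient_cyc; apply: glob; lia.
- by apply: glob; lia.
- by rewrite orient_cyc; apply: glob; lia.
- by rewrite orient_cyc2; apply: glob; lia.
- by rewrite orient_cyc2; apply: glob; lia.
Qed.

Lemma main (r : R) : (5 <= size s)%N -> 0 < r -> r < 2^-1 ->
  1 - 2 * r <= area (Kr r s) / area s.
Proof.
move=> h5 r0 rh.
have r1 : r < 1 by lra.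
have n0 : (0 < size s)%N by lia.
pose P k := meet (vtx s k) (Bpt r s k) (vtx s k.+1) (Bpt r s k.+1).
have Pmod : forall k, P (k %% size s)%N = P k.
  by move=> k; rewrite /P /Bpt vtx_mod vtx_mod1 vtx_mod2 vtx_mod3.
have vK : forall k, vtx (Kr r s) k = P k.
  move=> k; rewrite /vtx /Kr size_mkseq nth_mkseq; first exact: Pmod.
  by rewrite ltn_pmod.
have aK : area (Kr r s) = `|2^-1 * \sum_(0 <= k < size s) det2 (P k) (P k.+1)|.
  rewrite /area big_mkord.
  have sK : size (Kr r s) = size s by rewrite size_mkseq.
  rewrite sK.
  by congr (`|2^-1 * _|); apply: eq_bigr => k _; rewrite !vK.
have aS : area s = `|2^-1 * \sum_(0 <= k < size s) det2 (vtx s k) (vtx s k.+1)|.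
  by rewrite /area big_mkord.
rewrite aK aS.
set S := \sum_(0 <= k < size s) det2 (vtx s k) (vtx s k.+1).
set SP := \sum_(0 <= k < size s) det2 (P k) (P k.+1).
have fk : forall k, [/\ 0 < orient (vtx s k) (vtx s k.+1) (vtx s k.+2),
     0 < orient (vtx s k) (vtx s k.+1) (vtx s k.+3),
     0 < orient (vtx s k.+2) (vtx s k.+3) (vtx s k) &
     0 < orient (vtx s k.+1) (vtx s k.+2) (vtx s k.+3)].
  move=> k; split.
  - by have := @edge_off k 0 2; rewrite addn0 addn2; apply; lia.
  - by have := @edge_off k 0 3; rewrite addn0 addn3; apply; lia.
  - by have := @edge_off k 2 0; rewrite addn0 addn2; apply; lia.
  - by have := @edge_off k 1 3; rewrite addn1 addn3; apply; lia.
have F1 : forall k, det2 (vsub (vtx s k.+1) (vtx s k)) (vsub (P k) (vtx s k))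
     <= r * orient (vtx s k) (vtx s k.+1) (vtx s k.+2).
  by move=> k; case: (fk k) => h1 h2 h3 h4; have [_ ->] := @keyF1 R _ _ _ _ _ r0 r1 h1 h2 h3 h4.
have F2 : forall k, det2 (vsub (P k) (vtx s k.+1)) (vsub (P k.+1) (vtx s k.+1)) = 0.
  move=> k; case: (fk k) => h1 h2 h3 h4; have [hD _] := @keyF1 R _ _ _ _ _ r0 r1 h1 h2 h3 h4.
  exact: (@keyF2 R _ _ _ _ (vtx s k.+4) r (lt0r_neq0 hD)).
have Pn : P (size s) = P 0 by rewrite -(Pmod (size s)) modnn.
have e1 : S - SP = \sum_(0 <= k < size s) det2 (vsub (vtx s k.+1) (vtx s k)) (vsub (P k) (vtx s k)).
  rewrite /S /SP -sumrB.
  rewrite (eq_bigr (fun k => det2 (vsub (vtx s k.+1) (vtx s k)) (vsub (P k) (vtx s k))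
     + (det2 (P k.+1) (vtx s k.+1) - det2 (P k) (vtx s k)))); last first.
    by move=> k _; rewrite (@tele_id R (vtx s k)) F2 subr0.
  have sh := @shift R (fun k => det2 (P k) (vtx s k)) (size s).
  rewrite /= Pn vtx_n in sh.
  have Z : \sum_(0 <= k < size s) (det2 (P k.+1) (vtx s k.+1) - det2 (P k) (vtx s k)) = 0.
    by rewrite sumrB sh // subrr.
  by rewrite big_split /= Z addr0.
set G := \sum_(0 <= k < size s) det2 (vtx s k) (vtx s k.+2).
set T := \sum_(0 <= k < size s) orient (vtx s k) (vtx s k.+1) (vtx s k.+2).
have eT : T = 2 * S - G.
  rewrite /T; under eq_bigr do rewrite orient_det.
  rewrite sumrB big_split /=.
  have sh := @shift R (fun k => det2 (vtx s k) (vtx s k.+1)) (size s).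
  rewrite /= vtx_n vtx_nS in sh; rewrite sh // -/S -/G; ring.
have eG : G = @Hs R (vtx s) (size s).
  rewrite /G /Hs.
  have en : size s = ((size s - 2).+2)%N by lia.
  rewrite {1}en big_nat_recr // big_nat_recr //.
  have e2 : ((size s - 2).+2 = size s)%N by lia.
  have e3 : ((size s - 2).+1 = size s - 1)%N by lia.
  by rewrite e2 vtx_n vtx_nS e3.
have G0 : 0 <= G by rewrite eG; apply: Hpos; lia.
have hT : S - SP <= r * T.
  rewrite e1 /T mulr_sumr; apply: ler_sum => k _; exact: F1.
have Tpos : 0 < T.
  rewrite /T.
  have en : size s = ((size s - 1).+1)%N by lia.
  rewrite en big_nat_recl //.
  have [h0 _ _ _] := fk 0%N.
  have : 0 <= \sum_(0 <= i < size s - 1) orient (vtx s i.+1) (vtx s i.+2) (vtx s i.+3).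
    by apply: sumr_ge0 => i _; have [h _ _ _] := fk i.+1; apply: ltW.
  lra.
have Spos : 0 < S by lra.
have rG : 0 <= r * G by apply: mulr_ge0 => //; apply: ltW.
have hT' : S - 2 * (r * S) + r * G <= SP.
  have : r * T = 2 * (r * S) - r * G by rewrite eT; ring.
  lra.
have SPpos : 0 < SP.
  have : 0 < r * S by apply: mulr_gt0.
  have : 0 < (1 - 2 * r) * S by apply: mulr_gt0 => //; lra.
  lra.
rewrite !ger0_norm; first last.
- by apply: mulr_ge0; lra.
- by apply: mulr_ge0; lra.
rewrite ler_pdivlMr; last by apply: mulr_gt0; lra.
have : (1 - 2 * r) * (2^-1 * S) = 2^-1 * S - 2^-1 * (2 * (r * S)) by ring.
lra.
Qed.
End Main.

Theorem theorem5p1 (R : realFieldType) (s : seq (R * R)) (r : R) :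
  (5 <= size s)%N -> 0 < r -> r < 2^-1 -> convex_ccw s ->
  1 - 2 * r <= area (Kr r s) / area s.
Proof. by move=> h5 r0 rh hc; apply: (@main R s hc r h5 r0 rh). Qed.
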